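(* Let $n\ge 4$ be an integer not divisible by $3$. Then the prism $D_n=C_n\Box P_2$ (on $2n$ vertices) is $\mathbb{Z}_{2n}$-distance antimagic.
   Context: $C_n$ is the cycle of length $n$, $P_2$ the path with two vertices ($K_2$), and $\Box$ the Cartesian product: $V(G\Box H)=V(G)\times V(H)$, with $(x,u)\sim(y,v)$ iff ($x=y$ and $uv\in E(H)$) or ($u=v$ and $xy\in E(G)$). $\mathbb{Z}_m$ is the cyclic group of integers modulo $m$. For a graph $G$ with $N$ vertices and an Abelian group $A$ of order $N$, and a bijection $f:V(G)\to A$, the weight of $x$ is $w_f(x)=\sum_{y\in N(x)} f(y)$ computed in $A$ ($N(x)$ the open neighbourhood). $f$ is an $A$-distance antimagic labelling if all weights are pairwise distinct; $G$ is $A$-distance antimagic if it admits such a labelling. *)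

(* Defs.v *)
From HB Require Import structures.
From mathcomp Require Import all_boot all_order all_algebra.
Set Implicit Arguments. Unset Strict Implicit. Unset Printing Implicit Defensive.
Import GRing.Theory.
Local Open Scope ring_scope.

Definition cycle_adj (n : nat) : rel 'I_n :=
  fun i j => (((i.+1 %% n)%N == j) || ((j.+1 %% n)%N == i)).

Definition P2_adj : rel 'I_2 := fun u v => u != v.

Definition cart_adj (T U : finType) (g : rel T) (h : rel U) : rel (T * U) :=
  fun p q => ((p.1 == q.1) && h p.2 q.2) || ((p.2 == q.2) && g p.1 q.1).

Definition prism_adj (n : nat) : rel ('I_n * 'I_2) :=
  cart_adj (@cycle_adj n) P2_adj.

Definition weight (T : finType) (adj : rel T) (A : zmodType) (f : T -> A) (x : T) : A :=
  \sum_(y : T | adj x y) f y.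

Definition distance_antimagic_labelling (T : finType) (adj : rel T)
  (A : zmodType) (f : T -> A) : Prop :=
  bijective f /\ injective (weight adj f).

Definition distance_antimagic (T : finType) (adj : rel T) (A : zmodType) : Prop :=
  exists f : T -> A, distance_antimagic_labelling adj f.

(* Main.v *)
Require Import Defs.
From mathcomp Require Import all_boot all_order all_algebra.
From mathcomp Require Import zify.
Import GRing.Theory.

Lemma modS_spec (k n : nat) : k < n ->
  (k.+1 %% n = k.+1 /\ k.+1 < n) \/ (k.+1 %% n = 0 /\ k.+1 = n).
Proof.
move=> h; case: (ltngtP k.+1 n) => h2.
- by left; rewrite modn_small.
- by exfalso; lia.
- by right; rewrite h2 modnn.
Qed.

Lemma ord_eqE n (a b : 'I_n) : (a == b) = (nat_of_ord a == nat_of_ord b).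
Proof. by []. Qed.
Lemma pair_eqE (A B : eqType) (a c : A) (b d : B) : ((a, b) == (c, d)) = (a == c) && (b == d).
Proof. by []. Qed.

Lemma sA {n i0 ip0 a : nat} : (a = i0.+1 /\ i0.+1 < n \/ a = 0 /\ i0.+1 = n) ->
  (ip0 = i0.+1 /\ i0.+1 < n \/ ip0 = 0 /\ i0.+1 = n) -> a = ip0.
Proof. lia. Qed.
Lemma sC {n i0 im0 c : nat} : i0 < n -> (c = im0.+1 /\ im0.+1 < n \/ c = 0 /\ im0.+1 = n) ->
  (im0 = i0.-1 /\ 0 < i0 \/ im0 = n.-1 /\ i0 = 0) -> c = i0.
Proof. lia. Qed.
Lemma sD {n i0 j0 im0 d : nat} : i0 < n -> j0 < n -> (d = j0.+1 /\ j0.+1 < n \/ d = 0 /\ j0.+1 = n) ->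
  (im0 = i0.-1 /\ 0 < i0 \/ im0 = n.-1 /\ i0 = 0) -> d = i0 -> j0 = im0.
Proof. lia. Qed.
Lemma n1 {n i0 ip0 im0 : nat} : 3 < n -> i0 < n ->
  (ip0 = i0.+1 /\ i0.+1 < n \/ ip0 = 0 /\ i0.+1 = n) ->
  (im0 = i0.-1 /\ 0 < i0 \/ im0 = n.-1 /\ i0 = 0) -> (im0 == ip0) = false.
Proof. move=> h1 h2 h3 h4; apply/eqP; lia. Qed.
Lemma n2 {n i0 ip0 : nat} : (ip0 = i0.+1 /\ i0.+1 < n \/ ip0 = 0 /\ i0.+1 = n) -> 1 < n ->
  (i0 == ip0) = false.
Proof. move=> h1 h2; apply/eqP; lia. Qed.
Lemma n3 {n i0 im0 : nat} : (im0 = i0.-1 /\ 0 < i0 \/ im0 = n.-1 /\ i0 = 0) -> 1 < n ->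
  (i0 == im0) = false.
Proof. move=> h1 h2; apply/eqP; lia. Qed.
Lemma n4 {u0 : nat} : u0 < 2 -> (u0 == 1 - u0) = false.
Proof. move=> h; apply/eqP; lia. Qed.
Lemma n5 {u0 : nat} : u0 < 2 -> (1 - u0 == u0) = false.
Proof. move=> h; apply/eqP; lia. Qed.
Lemma n6 {u0 v0 : nat} : u0 < 2 -> v0 < 2 -> u0 != v0 -> v0 = 1 - u0.
Proof. move=> h1 h2 /eqP h3; lia. Qed.

Definition fz (n : nat) (y : 'I_n * 'I_2) : 'Z_(2 * n) := (((2 * y.1 + y.2)%N)%:R)%R.

Lemma weight_eq (n : nat) (hn : 4 <= n) (i : 'I_n) (u : 'I_2) :
  exists W : nat, W %% (2 * n) = (6 * i + 1 + u) %% (2 * n) /\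
    weight (@prism_adj n) (@fz n) (i, u) = (W%:R)%R.
Proof.
have n0 : 0 < n by lia.
have [ip hip] : exists ip : 'I_n, ((ip:nat) = i.+1 /\ i.+1 < n) \/ ((ip:nat) = 0 /\ i.+1 = n).
  case: (ltngtP i.+1 n) => h2.
  - by exists (Ordinal h2); left.
  - by have := ltn_ord i; lia.
  - by exists (Ordinal n0); right.
have [im him] : exists im : 'I_n, ((im:nat) = i.-1 /\ 0 < i) \/ ((im:nat) = n.-1 /\ i = 0 :> nat).
  case: (posnP i) => h2.
  - have h3 : n.-1 < n by lia.
    by exists (Ordinal h3); right.
  - have h3 : i.-1 < n by have := ltn_ord i; lia.
    by exists (Ordinal h3); left.
have h1u : (1 - u < 2)%N by lia.
set u' : 'I_2 := Ordinal h1u.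
have hi := ltn_ord i; have hu := ltn_ord u.
have hip' := ltn_ord ip; have him' := ltn_ord im.
have Hmi := modS_spec _ _ hi.
have Hmip := modS_spec _ _ hip'.
have Hmim := modS_spec _ _ him'.
rewrite /weight (bigD1 (ip, u)) /=; last first.
  rewrite /prism_adj /cart_adj /cycle_adj /P2_adj /= !ord_eqE /=.
  move: Hmi Hmip Hmim hip him; move: (i.+1 %% n) (ip.+1 %% n) (im.+1 %% n) => a b c.
  move: hi hu hip' him' hn; clear u' h1u.
  move: (nat_of_ord i) (nat_of_ord u) (nat_of_ord ip) (nat_of_ord im) => i0 u0 ip0 im0.
  move=> hi0 hu0 hip0 him0 hn' Ha Hb Hc Hip Him.
  by rewrite (sA Ha Hip) !eqxx /= ?orbT ?andbT.
rewrite (bigD1 (im, u)) /=; last first.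
  rewrite /prism_adj /cart_adj /cycle_adj /P2_adj /= /= !pair_eqE !ord_eqE /=.
  move: Hmi Hmip Hmim hip him; move: (i.+1 %% n) (ip.+1 %% n) (im.+1 %% n) => a b c.
  move: hi hu hip' him' hn; clear u' h1u.
  move: (nat_of_ord i) (nat_of_ord u) (nat_of_ord ip) (nat_of_ord im) => i0 u0 ip0 im0.
  move=> hi0 hu0 hip0 him0 hn' Ha Hb Hc Hip Him.
  by rewrite (sC hi0 Hc Him) (n1 hn' hi0 Hip Him) !eqxx /= ?orbT ?andbT.
rewrite (bigD1 (i, u')) /=; last first.
  rewrite /prism_adj /cart_adj /cycle_adj /P2_adj /= /= !pair_eqE !ord_eqE /=.
  move: Hmi Hmip Hmim hip him; move: (i.+1 %% n) (ip.+1 %% n) (im.+1 %% n) => a b c.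
  move: hi hu hip' him' hn; clear u' h1u.
  move: (nat_of_ord i) (nat_of_ord u) (nat_of_ord ip) (nat_of_ord im) => i0 u0 ip0 im0.
  move=> hi0 hu0 hip0 him0 hn' Ha Hb Hc Hip Him.
  have n1' : 1 < n by lia.
  by rewrite (n4 hu0) (n5 hu0) (n2 Hip n1') (n3 Him n1') !eqxx.
rewrite big1; last first.
  move=> [j v] /=.
  rewrite /prism_adj /cart_adj /cycle_adj /P2_adj /= /= !pair_eqE !ord_eqE /=.
  have hj := ltn_ord j; have hv := ltn_ord v.
  have Hmj := modS_spec _ _ hj.
  move: Hmi Hmj Hmip Hmim hip him; move: (i.+1 %% n) (j.+1 %% n) (ip.+1 %% n) (im.+1 %% n) => a d b c.
  move: hi hu hip' him' hn hj hv; clear u' h1u.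
  move: (nat_of_ord i) (nat_of_ord u) (nat_of_ord ip) (nat_of_ord im) (nat_of_ord j) (nat_of_ord v) => i0 u0 ip0 im0 j0 v0.
  move=> hi0 hu0 hip0 him0 hn' hj0 hv0 Ha Hd Hb Hc Hip Him.
  move=> /andP[/andP[/andP[H m1] m2] m3]; exfalso.
  case/orP: H => [/andP[/eqP eij neq] | /andP[/eqP euv /orP[/eqP eaj | /eqP edi]]].
  - by move: m3; rewrite eij (n6 hu0 hv0 neq) !eqxx.
  - by move: m1; rewrite -eaj (sA Ha Hip) euv !eqxx.
  - by move: m2; rewrite (sD hi0 hj0 Hd Him edi) euv !eqxx.
clear Hmi Hmip Hmim.
rewrite /fz /= addr0 -!natrD.
eexists; split; last reflexivity.
case: hip => [[e1 e2]|[e1 e2]]; case: him => [[e3 e4]|[e3 e4]]; rewrite e1 e3 /=.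
- congr (_ %% _); lia.
- rewrite -(modnDr (6 * i + 1 + u) (2 * n)); congr (_ %% _); lia.
- rewrite -(modnDr _ (2 * n)); congr (_ %% _); lia.
- lia.
Qed.
Lemma key (n i j u v : nat) : 0 < n -> coprime n 3 -> i < n -> j < n -> u < 2 -> v < 2 ->
  (6*i+1+u) %% (2*n) = (6*j+1+v) %% (2*n) -> i = j /\ u = v.
Proof.
move=> n0 cop hi hj hu hv H.
have H2 := congr1 (modn^~ 2) H; rewrite /= !modn_dvdm ?dvdn_mulr // in H2.
have uv : u = v by lia.
subst v; split => //; clear H2.
move/eqP: H; rewrite -addnA -(addnA (6*j)) eqn_modDr => H.
wlog le : i j hi hj H / j <= i.
  move=> W; case: (leqP j i) => h; first exact: W.
  by symmetry; apply: W => //; [rewrite eq_sym | exact: ltnW].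
move: H; rewrite eqn_mod_dvd; last by lia.
rewrite -mulnBr (_ : 6 = 2 * 3) // -mulnA dvdn_pmul2l // Gauss_dvdr // => D.
have: i - j < n by lia.
case: (posnP (i - j)) => [|p]; first by lia.
by move=> lt; have := dvdn_leq p D; lia.
Qed.

Theorem mainTheorem10 (n : nat) (hn : (4 <= n)%N) (h3 : ~~ (3 %| n)%N) :
  distance_antimagic (@prism_adj n) 'Z_(2 * n).
Proof.
have n0 : 0 < n by lia.
have n2 : 1 < 2 * n by lia.
have cop : coprime n 3 by rewrite coprime_sym prime_coprime.
exists (@fz n); split.
  apply: inj_card_bij; last first.
    by rewrite card_prod !card_ord Zp_cast // mulnC.
  move=> [i u] [j v] /(congr1 val); rewrite /fz /= !val_Zp_nat // !modn_small; last 2 first.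
  - by have := ltn_ord j; have := ltn_ord v; lia.
  - by have := ltn_ord i; have := ltn_ord u; lia.
  have := ltn_ord u; have := ltn_ord v => hu hv E.
  have eu : (u : nat) = v by lia.
  have ei : (i : nat) = j by lia.
  by congr pair; apply: val_inj.
move=> [i u] [j v].
have [W1 [e1 ->]] := weight_eq _ hn i u.
have [W2 [e2 ->]] := weight_eq _ hn j v.
move/(congr1 val); rewrite /= !val_Zp_nat // e1 e2 => E.
have [ei eu] := key _ _ _ _ _ n0 cop (ltn_ord i) (ltn_ord j) (ltn_ord u) (ltn_ord v) E.
by congr pair; apply: val_inj.
Qed.
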